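(* Let $k\ge 2$ and let $G$ be a $\Gamma_{\times k,t}$-external graph with $\delta(G)\ge k$. Then for every graph $H$ with $\delta(H)\ge k$, \[ \Gamma_{\times k,t}(G\,\Box\,H)\ge\Gamma_{\times k,t}(G)\cdot\Gamma_{\times k,t}(H). \]
   Context: A set $S\subseteq V(G)$ is a $k$-tuple total dominating set ($k$TDS) of a graph $G$ with $\delta(G)\ge k$ if $|N_G(x)\cap S|\ge k$ for every $x\in V(G)$. The upper $k$-tuple total domination number $\Gamma_{\times k,t}(G)$ is the maximum cardinality of a minimal (with respect to inclusion) $k$TDS of $G$; a minimal $k$TDS of this cardinality is a $\Gamma_{\times k,t}$-set. For $v\in S$, a vertex $v'$ is a $k$-open private neighbor of $v$ with respect to $S$ if $v\in N_G(v')$ and $|N_G(v')\cap S|=k$; it is external if $v'\notin S$. A graph $G$ is $\Gamma_{\times k,t}$-external if it has a $\Gamma_{\times k,t}$-set $S$ such that every vertex of $S$ has an external $k$-open private neighbor with respect to $S$. The Cartesian product $G\,\Box\,H$ has vertex set $V(G)\times V(H)$, with $(g_1,h_1)\sim(g_2,h_2)$ iff either $g_1=g_2$ and $h_1h_2\in E(H)$, or $h_1=h_2$ and $g_1g_2\in E(G)$. *)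

(* Defs.v *)
(* Finite simple graphs: symmetric irreflexive relation on a finType. *)
From mathcomp Require Import all_boot.
Set Implicit Arguments. Unset Strict Implicit. Unset Printing Implicit Defensive.

Section Defs.
Variable T : finType.
Variable e : rel T.

Definition nbhd (x : T) : {set T} := [set y | e x y].

Definition mindeg_ge (k : nat) : Prop := forall x : T, k <= #|nbhd x|.

Definition is_kTDS (k : nat) (S : {set T}) : bool :=
  [forall x, k <= #|nbhd x :&: S|].

Definition minimal_kTDS (k : nat) (S : {set T}) : bool :=
  minset (fun A : {set T} => is_kTDS k A) S.

Definition upper_kTDN (k : nat) : nat :=
  \max_(S : {set T} | minimal_kTDS k S) #|S|.

Definition Gamma_set (k : nat) (S : {set T}) : Prop :=
  minimal_kTDS k S /\ #|S| = upper_kTDN k.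

Definition ext_kopn (k : nat) (S : {set T}) (v v' : T) : Prop :=
  e v' v /\ #|nbhd v' :&: S| = k /\ v' \notin S.

Definition Gamma_external (k : nat) : Prop :=
  exists S : {set T}, Gamma_set k S /\
    forall v, v \in S -> exists v', ext_kopn k S v v'.
End Defs.

Definition cartesian (T1 T2 : finType) (e1 : rel T1) (e2 : rel T2) : rel (T1 * T2) :=
  fun x y => ((x.1 == y.1) && e2 x.2 y.2) || ((x.2 == y.2) && e1 x.1 y.1).

(* Main.v *)
Require Import Defs.
From mathcomp Require Import all_boot.

Lemma upper_le_card (T : finType) (e : rel T) k : upper_kTDN e k <= #|T|.
Proof.
rewrite /upper_kTDN; apply/bigmax_leqP => S _; exact: max_card.
Qed.

Theorem mainTheorem11 (k : nat) (hk : 2 <= k)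
  (T1 : finType) (e1 : rel T1) (e1sym : symmetric e1) (e1irr : irreflexive e1)
  (hG : mindeg_ge e1 k) (hext : Gamma_external e1 k)
  (T2 : finType) (e2 : rel T2) (e2sym : symmetric e2) (e2irr : irreflexive e2)
  (hH : mindeg_ge e2 k) :
  upper_kTDN e1 k * upper_kTDN e2 k <= upper_kTDN (cartesian e1 e2) k.
Proof.
case: hext => S [[Smin Scard] Hpriv].
have SkT : is_kTDS e1 k S by move/minsetP: Smin => [].
set X := setX S [set: T2].
have XkT : is_kTDS (cartesian e1 e2) k X.
  apply/forallP => [[g h]].
  have := forallP SkT g => Hg.
  apply: leq_trans Hg _.
  rewrite -(card_imset _ (f := fun g' => (g', h))); last by move=> a b [].
  apply: subset_leq_card; apply/subsetP => y /imsetP [a].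
  rewrite !inE => /andP [ga aS] ->.
  by rewrite /cartesian /= eqxx ga aS orbT.
have Xmin : minimal_kTDS (cartesian e1 e2) k X.
  apply/minsetP; split => // B BkT BX.
  apply/eqP; rewrite eqEsubset BX /=.
  apply/negPn/negP => /subsetPn [[s h] sX sB].
  have sS : s \in S by move: sX; rewrite !inE => /andP [].
  case: (Hpriv s sS) => v [vs [vk vS]].
  have := forallP BkT (v, h).
  apply/negP; rewrite -ltnNge.
  have H1 : nbhd (cartesian e1 e2) (v, h) :&: B \proper nbhd (cartesian e1 e2) (v, h) :&: X.
    apply/properP; split.
      by apply: setIS.
    exists (s, h); last by rewrite inE (negbTE sB) andbF.
    by rewrite !inE /cartesian /= eqxx vs orbT sS.
  apply: (leq_trans (proper_card H1)).
  rewrite -vk -[#|nbhd e1 v :&: S|](card_imset _ (f := fun g' => (g', h))); last by move=> a b [].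
  apply: subset_leq_card; apply/subsetP => [[a b]].
  rewrite !inE /cartesian /= => /andP [/orP [/andP [/eqP va _]| /andP [/eqP hb va]] /andP [aS _]].
    by subst a; rewrite aS in vS.
  subst b; apply/imsetP; exists a => //; by rewrite !inE va aS.
apply: (@leq_trans (#|S| * #|T2|)).
  by rewrite Scard leq_mul2l upper_le_card orbT.
rewrite -cardsT -cardsX.
by apply: (leq_bigmax_cond (F := fun A : {set _} => #|A|)) Xmin.
Qed.
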